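(* Consider a single-item auction setting with a feature space $\mathcal{Z}$, $n$ buyers each with unit demand and a single seller with supply $\lambda > 0$ and cost $c = 0$. Conditioned on each feature vector $z$, the buyers' bids $b_1,\dots,b_n$ are independent with $b_i \sim F_i^z$. For a pricing policy $p:\mathcal{Z}\to\mathbb{R}$ the clearing loss is $$\ell^c(p,z,\mathbf{b},c) = \sum_{i=1}^n \max\{b_i - p(z),0\} + \lambda \max\{p(z)-c,0\}.$$ Let $p$ be the pricing policy minimizing the expected clearing loss (i.e., for each $z$, $p(z)$ solves $\sum_{i=1}^n (1-F_i^z(p(z))) = \lambda$). Let $b^{(1)} = \max_i b_i$. Then the expected social welfare $\mathbb{E}[{\sf SW}] = \mathbb{E}[b^{(1)}\,\mathbf{1}[b^{(1)} \ge p]]$ under $p$ is at least $(1-e^{-\lambda})\,\mathbb{E}[b^{(1)}]$, i.e., at least a $1-e^{-\lambda}$ fraction of the optimal social welfare, which is obtained by setting no reserve.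
   Context: $\mathbf{1}[\cdot]$ is the indicator function. Social welfare is the value of the highest bid when the item is sold and $0$ otherwise. *)

(* Defs.v *)
From HB Require Import structures.
From mathcomp Require Import all_boot all_order all_algebra.
From mathcomp Require Import all_classical all_reals all_analysis.
Set Implicit Arguments. Unset Strict Implicit. Unset Printing Implicit Defensive.
Import Order.TTheory GRing.Theory Num.Theory.
Local Open Scope classical_set_scope.
Local Open Scope ring_scope.

(* Bids live on a sample space Omega; given the feature z, the joint law of the
   outcome is the probability measure k z (k a probability kernel Z ~> Omega);
   the bid of buyer i is the measurable function b i : Omega -> R. *)

(* highest bid b^(1) = max_i b_i (bids are nonnegative, so 0 is a neutral start) *)
Definition top_bid (R : realType) (T : Type) (n : nat) (b : 'I_n -> T -> R)
  (w : T) : R := \big[Num.max/0]_(i < n) b i w.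

Definition cond_cdf d d' (Z : measurableType d) (Omega : measurableType d')
  (R : realType) (k : R.-pker Z ~> Omega) (n : nat) (b : 'I_n -> Omega -> R)
  (i : 'I_n) (z : Z) (t : R) : R :=
  fine (k z [set w | b i w <= t]).

Definition bids_cond_indep d d' (Z : measurableType d) (Omega : measurableType d')
  (R : realType) (k : R.-pker Z ~> Omega) (n : nat) (b : 'I_n -> Omega -> R) : Prop :=
  forall (z : Z) (A : 'I_n -> set R), (forall i, measurable (A i)) ->
    k z (\bigcap_(i in [set: 'I_n]) (b i @^-1` A i)) =
    (\big[*%E/1%E]_(i < n) k z (b i @^-1` A i))%E.

(* Main.v *)
Require Import Defs.
From HB Require Import structures.
From mathcomp Require Import all_boot all_order all_algebra.
From mathcomp Require Import all_classical all_reals all_analysis.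
From mathcomp Require Import lra measurable_realfun.
Import Order.TTheory GRing.Theory Num.Theory.
Local Open Scope classical_set_scope.
Local Open Scope ring_scope.

Lemma le_integral_nomeas d (T : measurableType d) (R : realType)
  (mu : {measure set T -> \bar R}) (f g : T -> \bar R) :
  (forall x, (0 <= f x)%E) -> (forall x, (f x <= g x)%E) ->
  (\int[mu]_x f x <= \int[mu]_x g x)%E.
Proof.
move=> f0 fg.
have g0 x : (0 <= g x)%E by apply: le_trans (f0 x) (fg x).
rewrite (ge0_integralTE mu f0) (ge0_integralTE mu g0).
apply: ereal_sup_le => _ [h hf <-]; exists h => //= x.
exact: le_trans (hf x) (fg x).
Qed.

Lemma top_bid_ge0 (R : realType) (T : Type) (n : nat) (b : 'I_n -> T -> R) w :
  0 <= top_bid b w.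
Proof.
rewrite /top_bid; elim: (index_enum _) => [|i r IH]; first by rewrite big_nil.
by rewrite big_cons le_max IH orbT.
Qed.

Lemma top_bid_meas d (T : measurableType d) (R : realType) (n : nat)
  (b : 'I_n -> T -> R) :
  (forall i, measurable_fun setT (b i)) -> measurable_fun setT (top_bid b).
Proof.
move=> mb; rewrite /top_bid.
elim: (index_enum _) => [|i r IH].
  by rewrite (_ : (fun _ => _) = cst 0); [exact: measurable_cst|apply/funext => w; rewrite big_nil].
rewrite (_ : (fun _ => _) = (b i) \max (fun w => \big[Num.max/0]_(j <- r) b j w)).
  exact: measurable_realfun.measurable_maxr.
by apply/funext => w; rewrite big_cons.
Qed.

Lemma prob_low d (T : measurableType d) (R : realType)
  (P : {measure set T -> \bar R}) (n : nat) (b : 'I_n -> T -> R) (lam pi : R) :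
  P setT = 1%E -> 0 < pi -> (forall i, measurable_fun setT (b i)) ->
  (forall (A : 'I_n -> set R), (forall i, measurable (A i)) ->
    P (\bigcap_(i in [set: 'I_n]) (b i @^-1` A i)) =
    (\big[*%E/1%E]_(i < n) P (b i @^-1` A i))%E) ->
  \sum_(i < n) (1 - fine (P [set w | (b i w <= pi)%R])) = lam ->
  (P [set w | (top_bid b w < pi)%R] <= (expR (- lam))%:E)%E.
Proof.
move=> P1 pi0 mb ind hsum.
have mpre i (A : set R) : measurable A -> measurable (b i @^-1` A).
  by move=> mA; rewrite -[X in measurable X]setTI; exact: mb.
have finP (A : set T) : measurable A -> P A \is a fin_num.
  move=> mA; rewrite ge0_fin_numE ?measure_ge0//.
  by rewrite (le_lt_trans _ (ltey 1)) // -P1 le_measure ?inE.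
have -> : [set w | top_bid b w < pi] =
    \bigcap_(i in [set: 'I_n]) (b i @^-1` `]-oo, pi[).
  apply/seteqP; split => w /=.
    move=> /bigmax_ltP [_ h] i _ /=; rewrite in_itv /=; exact: h.
  move=> h; apply/bigmax_ltP; split => // i _.
  by have := h i Logic.I; rewrite /= in_itv.
rewrite ind; last by move=> i; exact: measurable_itv.
have -> : (\big[*%E/1%E]_(i < n) P (b i @^-1` `]-oo, pi[) =
    (\prod_(i < n) fine (P (b i @^-1` `]-oo, pi[)))%:E)%E.
  rewrite -prodEFin; apply: eq_bigr => i _.
  by rewrite fineK //; apply: finP; apply: mpre; exact: measurable_itv.
rewrite lee_fin -hsum -sumrN expR_sum; apply: ler_prod => i _.
apply/andP; split; first exact: fine_ge0 (measure_ge0 _ _).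
rewrite opprB; apply: le_trans (expR_ge1Dx _); rewrite addrC subrK.
have hle : [set w | b i w <= pi] = b i @^-1` `]-oo, pi] by apply/seteqP; split => w /=; rewrite in_itv.
rewrite hle fine_le //; try (apply: finP; apply: mpre; exact: measurable_itv).
apply: le_measure; rewrite ?inE; try (apply: mpre; exact: measurable_itv).
by move=> w /=; rewrite !in_itv /= => /ltW.
Qed.

Lemma inner d (T : measurableType d) (R : realType)
  (P : {measure set T -> \bar R}) (n : nat) (b : 'I_n -> T -> R) (lam pi : R) :
  P setT = 1%E -> 0 < lam -> (forall i, measurable_fun setT (b i)) ->
  (forall (A : 'I_n -> set R), (forall i, measurable (A i)) ->
    P (\bigcap_(i in [set: 'I_n]) (b i @^-1` A i)) =
    (\big[*%E/1%E]_(i < n) P (b i @^-1` A i))%E) ->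
  \sum_(i < n) (1 - fine (P [set w | (b i w <= pi)%R])) = lam ->
  ((1 - expR (- lam))%:E * \int[P]_w (top_bid b w)%:E <=
   \int[P]_w (top_bid b w * ((pi <= top_bid b w)%R)%:R)%:E)%E.
Proof.
move=> P1 lam0 mb ind hsum.
set e := expR (- lam).
have e0 : 0 <= e by exact: ltW (expR_gt0 _).
have e1 : e <= 1 by rewrite /e expR_le1 oppr_le0 ltW.
set X := top_bid b.
have X0 w : 0 <= X w by exact: top_bid_ge0.
have mX : measurable_fun setT X by exact: top_bid_meas.
have mpre (A : set R) : measurable A -> measurable (X @^-1` A).
  by move=> mA; rewrite -[x in measurable x]setTI; exact: mX.
have mind : measurable_fun setT (fun w => ((pi <= X w)%R)%:R : R).
  rewrite (_ : (fun w => _) = \1_(X @^-1` `[pi, +oo[)).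
    apply: measurable_realfun.measurable_indic; apply: mpre; exact: measurable_itv.
  apply/funext => w; rewrite indicE; congr ((nat_of_bool _)%:R); apply/idP/idP.
    by move=> h; apply/mem_set; rewrite /= in_itv /= andbT.
  by move=> /set_mem; rewrite /= in_itv /= andbT.
have mXi : measurable_fun setT (fun w => X w * ((pi <= X w)%R)%:R).
  exact: measurable_realfun.measurable_funM.
have intX0 : (0 <= \int[P]_w (X w)%:E)%E by apply: integral_ge0 => w _; rewrite lee_fin.
case: (leP pi 0) => hpi.
  rewrite [Y in (_ <= Y)%E](eq_integral (fun w => (X w)%:E)); last first.
    by move=> w _; rewrite (le_trans hpi (X0 w)) mulr1.
  apply: gee_pMl => //; rewrite lee_fin lerBlDr lerDl //.
set S := [set w | (X w < pi)%R].
have mS : measurable S.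
  rewrite (_ : S = X @^-1` `]-oo, pi[); first by apply: mpre; exact: measurable_itv.
  by apply/seteqP; split => w /=; rewrite in_itv.
have hS : (P S <= e%:E)%E by exact: prob_low P1 hpi mb ind hsum.
have key : (\int[P]_w ((1 - e) * X w + e * pi)%:E <=
            \int[P]_w (X w * ((pi <= X w)%R)%:R + pi * \1_S w)%:E)%E.
  apply: le_integral_nomeas => w.
    by rewrite lee_fin addr_ge0 // ?mulr_ge0 // ?subr_ge0 // ltW.
  rewrite lee_fin indicE.
  have -> : (w \in S) = (X w < pi) by apply/idP/idP => [/set_mem //|h]; apply/mem_set.
  case: (leP pi (X w)) => h /=.
    rewrite mulr1 mulr0 addr0; nra.
  rewrite mulr0 mulr1 add0r; nra.
have e10 : 0 <= 1 - e by rewrite subr_ge0.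
have mcst (c : R) : measurable_fun setT (fun _ : T => c) by exact: measurable_cst.
have mIS : measurable_fun setT (\1_S : T -> R) by exact: measurable_realfun.measurable_indic.
have ind0 w : 0 <= (\1_S w : R) by rewrite indicE ler0n.
have EL : (\int[P]_w ((1 - e) * X w + e * pi)%:E =
    (1 - e)%:E * \int[P]_w (X w)%:E + (e * pi)%:E)%E.
  under eq_integral do rewrite EFinD.
  rewrite (@ge0_integralD _ _ _ P _ measurableT (fun w => ((1 - e) * X w)%:E) (fun w => (e * pi)%:E)); last 4 first.
  - by move=> w _; rewrite lee_fin mulr_ge0.
  - by apply/measurable_realfun.measurable_EFinP; apply: measurable_realfun.measurable_funM.
  - by move=> w _; rewrite lee_fin mulr_ge0 // ltW.
  - by apply/measurable_realfun.measurable_EFinP.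
  under eq_integral do rewrite EFinM.
  rewrite (@ge0_integralZl_EFin _ _ _ P _ measurableT (fun w => (X w)%:E)); last 3 first.
  - by move=> w _; rewrite lee_fin.
  - by apply/measurable_realfun.measurable_EFinP.
  - exact: e10.
  by rewrite integral_cst // P1 mule1.
have ER : (\int[P]_w (X w * ((pi <= X w)%R)%:R + pi * \1_S w)%:E =
    \int[P]_w (X w * ((pi <= X w)%R)%:R)%:E + pi%:E * P S)%E.
  under eq_integral do rewrite EFinD.
  rewrite (@ge0_integralD _ _ _ P _ measurableT (fun w => (X w * ((pi <= X w)%R)%:R)%:E) (fun w => (pi * \1_S w)%:E)); last 4 first.
  - by move=> w _; rewrite lee_fin mulr_ge0.
  - by apply/measurable_realfun.measurable_EFinP.
  - by move=> w _; rewrite lee_fin mulr_ge0 // ltW.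
  - by apply/measurable_realfun.measurable_EFinP; apply: measurable_realfun.measurable_funM.
  congr (_ + _)%E.
  under eq_integral do rewrite EFinM.
  rewrite (@ge0_integralZl_EFin _ _ _ P _ measurableT (fun w => (\1_S w)%:E)); last 3 first.
  - by move=> w _; rewrite lee_fin.
  - by apply/measurable_realfun.measurable_EFinP.
  - exact: ltW.
  by rewrite integral_indic // setIT.
rewrite EL ER in key.
have : ((1 - e)%:E * \int[P]_w (X w)%:E + (e * pi)%:E <=
        \int[P]_w (X w * ((pi <= X w)%R)%:R)%:E + (e * pi)%:E)%E.
  apply: le_trans key _; apply: leeD2l.
  rewrite mulrC EFinM; apply: lee_pmul => //; rewrite ?lee_fin ?ltW //.
by rewrite leeD2rE.
Qed.


Theorem mainTheorem3 (d d' : measure_display) (Z : measurableType d)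
  (Omega : measurableType d') (R : realType)
  (mu : probability Z R) (k : R.-pker Z ~> Omega)
  (n : nat) (b : 'I_n -> Omega -> R) (lam : R) (p : Z -> R) :
  0 < lam ->
  (forall i, measurable_fun setT (b i)) ->
  (forall i w, 0 <= b i w) ->
  bids_cond_indep k b ->
  measurable_fun setT p ->
  (forall z, \sum_(i < n) (1 - cond_cdf k b i z (p z)) = lam) ->
  ((1 - expR (- lam))%R%:E *
     \int[mu]_z \int[k z]_w (top_bid b w)%:E
   <= \int[mu]_z \int[k z]_w
        (top_bid b w * ((p z <= top_bid b w)%R)%:R)%R%:E)%E.
Proof.
move=> lam0 mb b0 ind mp hsum.
have e10 : 0 <= 1 - expR (- lam).
  by rewrite subr_ge0 expR_le1 oppr_le0 ltW.
have mF : measurable_fun setT ((fun z => \int[k z]_w (top_bid b w)%:E)%E : Z -> \bar R).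
  apply: measurable_fun_integral_kernel.
  - by move=> U mU; exact: measurable_kernel.
  - by move=> w; rewrite lee_fin top_bid_ge0.
  - by apply/measurable_realfun.measurable_EFinP; exact: top_bid_meas.
have F0 z : (0 <= \int[k z]_w (top_bid b w)%:E)%E.
  by apply: integral_ge0 => w _; rewrite lee_fin top_bid_ge0.
rewrite -(@ge0_integralZl_EFin _ _ _ mu _ measurableT _ (fun z _ => F0 z) mF _ e10).
apply: le_integral_nomeas.
  by move=> z; rewrite mule_ge0 // lee_fin.
move=> z; apply: (@inner _ _ _ (k z) n b lam (p z)) => //.
- exact: prob_kernel.
- exact: ind.
- exact: hsum.
Qed.
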